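(* Let $c>0$, $N,n,n_1,n_2,a_1,a_2,\varepsilon\in\mathbb{R}$, $D=\{\vec\gamma:\gamma_1^2+\gamma_2^2>0\}$, $\rho=\sqrt{\gamma_1^2+\gamma_2^2}$, $\mathbb{I}=\operatorname{diag}(2c,2c,c)$, let $\vec\mu$ be as follows: $$\mu_1=c\Big(-n\gamma_1-n_1\gamma_1^2+2n_1\gamma_2^2+n_1\gamma_3^2-3n_2\gamma_1\gamma_2+\frac{N\gamma_1}{\rho^{3}}\Big),\quad \mu_2=c\Big(-n\gamma_2+2n_2\gamma_1^2-n_2\gamma_2^2+n_2\gamma_3^2-3n_1\gamma_1\gamma_2+\frac{N\gamma_2}{\rho^{3}}\Big),$$ $$\mu_3=-c\gamma_3\Big(3n+5n_1\gamma_1+5n_2\gamma_2+\frac{N\gamma_3}{\rho}\Big),$$ and $U(\vec\gamma)=c(a_1\gamma_1+a_2\gamma_2)+\frac{\varepsilon}{\rho}-\frac12c\big(n+n_1\gamma_1+n_2\gamma_2+\frac N\rho\big)^2(2\gamma_1^2+2\gamma_2^2+\gamma_3^2)$. Let $$I_2=\vec M\cdot\vec\gamma+c\Big(n+n_1\gamma_1+n_2\gamma_2+\frac{N}{\rho}\Big)(2\gamma_1^2+2\gamma_2^2+\gamma_3^2).$$ (a) If $N\neq0$, then $I_2$ is not a constant of motion of the system $\dot{\vec M}=-\mathbb{I}^{-1}\vec M\times(\vec M+\vec\mu)+\vec\gamma\times\nabla_{\vec\gamma}U$, $\dot{\vec\gamma}=\vec\gamma\times\mathbb{I}^{-1}\vec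 M$ on $\mathbb{R}^3\times D$. (b) Let $\vec\mu'=(\mu_1,\mu_2,\mu_3')$ with $\mu_3'=-c\gamma_3\big(3n+5n_1\gamma_1+5n_2\gamma_2-N\frac{\gamma_3^2+1}{\rho^{3}}\big)$. Then $\vec\mu'=\psi\vec\gamma+\nabla_{\vec\gamma}\varphi$ with $\varphi=c\big(n+n_1\gamma_1+n_2\gamma_2+\frac N\rho\big)(2\gamma_1^2+2\gamma_2^2+\gamma_3^2)$ and $\psi=-c\big(5n+7n_1\gamma_1+7n_2\gamma_2+N\frac{2\rho^2-\gamma_3^2-1}{\rho^3}\big)$; hence $\Pi_{\vec\mu'}$ defines a Poisson bracket on $\mathbb{R}^3\times D$ and $I_2$ is a Casimir function of $\Pi_{\vec\mu'}$.
   Context: Coordinates on $\mathbb{R}^6$ are $(\vec M,\vec\gamma)=(M_1,M_2,M_3,\gamma_1,\gamma_2,\gamma_3)$. For a smooth $\vec\mu=(\mu_1,\mu_2,\mu_3)$ of $(\vec M,\vec\gamma)$, $\Pi_{\vec\mu}$ is the skew-symmetric $6\times6$ matrix $$\Pi_{\vec\mu}=\begin{bmatrix}0&-M_3-\mu_3&M_2+\mu_2&0&-\gamma_3&\gamma_2\\ M_3+\mu_3&0&-M_1-\mu_1&\gamma_3&0&-\gamma_1\\ -M_2-\mu_2&M_1+\mu_1&0&-\gamma_2&\gamma_1&0\\ 0&-\gamma_3&\gamma_2&0&0&0\\ \gamma_3&0&-\gamma_1&0&0&0\\ -\gamma_2&\gamma_1&0&0&0&0\end{bmatrix},$$ it ''defines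 a Poisson bracket'' if $\{f,g\}_{\vec\mu}=(\nabla f)^T\Pi_{\vec\mu}\nabla g$ satisfies the Jacobi identity, and a Casimir function is a smooth $C$ with $\Pi_{\vec\mu}\nabla C=0$. A constant of motion is a function constant along every solution. *)

(* Defs.v *)
From Stdlib Require Import Reals.
Open Scope R_scope.

Inductive idx : Type := M1 | M2 | M3 | G1 | G2 | G3.

Definition idx_eqb (i j : idx) : bool :=
  match i, j with
  | M1, M1 | M2, M2 | M3, M3 | G1, G1 | G2, G2 | G3, G3 => true
  | _, _ => false
  end.

Definition State := idx -> R.

Definition upd (p : State) (i : idx) (s : R) : State :=
  fun j => if idx_eqb j i then s else p j.

Definition sum6 (F : idx -> R) : R :=
  F M1 + F M2 + F M3 + F G1 + F G2 + F G3.

Definition partial (f : State -> R) (i : idx) (p : State) (l : R) : Prop :=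
  derivable_pt_lim (fun s => f (upd p i s)) (p i) l.

Definition is_grad (O : State -> Prop) (f : State -> R) (df : State -> idx -> R) : Prop :=
  forall p, O p -> forall i, partial f i p (df p i).

Definition cont_on (O : State -> Prop) (f : State -> R) : Prop :=
  forall p, O p -> forall eps, eps > 0 -> exists delta, delta > 0 /\
    forall q, O q -> (forall i, Rabs (q i - p i) < delta) -> Rabs (f q - f p) < eps.

Fixpoint Ck (O : State -> Prop) (k : nat) (f : State -> R) : Prop :=
  match k with
  | 0%nat => cont_on O f
  | S k' => exists df : State -> idx -> R,
      is_grad O f df /\ forall i, Ck O k' (fun p => df p i)
  end.

Definition smooth (O : State -> Prop) (f : State -> R) : Prop := forall k, Ck O k f.

Definition inD (p : State) : Prop := p G1 ^ 2 + p G2 ^ 2 > 0.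

Definition rho (p : State) : R := sqrt (p G1 ^ 2 + p G2 ^ 2).

Definition Pi (m1 m2 m3 : State -> R) (p : State) (i j : idx) : R :=
  let a1 := p M1 + m1 p in let a2 := p M2 + m2 p in let a3 := p M3 + m3 p in
  let g1 := p G1 in let g2 := p G2 in let g3 := p G3 in
  match i, j with
  | M1, M2 => - a3 | M1, M3 => a2 | M1, G2 => - g3 | M1, G3 => g2
  | M2, M1 => a3 | M2, M3 => - a1 | M2, G1 => g3 | M2, G3 => - g1
  | M3, M1 => - a2 | M3, M2 => a1 | M3, G1 => - g2 | M3, G2 => g1
  | G1, M2 => - g3 | G1, M3 => g2
  | G2, M1 => g3 | G2, M3 => - g1
  | G3, M1 => - g2 | G3, M2 => g1
  | _, _ => 0
  end.

Definition bracket (P : State -> idx -> idx -> R) (df dg : State -> idx -> R) (p : State) : R :=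
  sum6 (fun i => sum6 (fun j => df p i * P p i j * dg p j)).

Definition poisson_on (O : State -> Prop) (P : State -> idx -> idx -> R) : Prop :=
  forall f g h : State -> R, smooth O f -> smooth O g -> smooth O h ->
  forall df dg dh dfg dgh dhf : State -> idx -> R,
    is_grad O f df -> is_grad O g dg -> is_grad O h dh ->
    is_grad O (bracket P df dg) dfg ->
    is_grad O (bracket P dg dh) dgh ->
    is_grad O (bracket P dh df) dhf ->
    forall p, O p ->
      bracket P dfg dh p + bracket P dgh df p + bracket P dhf dg p = 0.

Definition is_casimir (O : State -> Prop) (P : State -> idx -> idx -> R) (C : State -> R) : Prop :=
  smooth O C /\
  forall dC, is_grad O C dC -> forall p, O p -> forall i, sum6 (fun j => P p i j * dC p j) = 0.

Definition is_solution (F : State -> idx -> R) (O : State -> Prop) (a b : R) (X : R -> State) : Prop :=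
  a < b /\ forall t, a < t < b -> O (X t) /\
    forall i, derivable_pt_lim (fun s => X s i) t (F (X t) i).

Definition constant_of_motion (F : State -> idx -> R) (O : State -> Prop) (f : State -> R) : Prop :=
  forall a b X, is_solution F O a b X ->
    forall t s, a < t < b -> a < s < b -> f (X t) = f (X s).

Section Data.
Variables (c N n n1 n2 a1 a2 eps : R).

Definition mu1 (p : State) : R :=
  let g1 := p G1 in let g2 := p G2 in let g3 := p G3 in
  c * (- n * g1 - n1 * g1 ^ 2 + 2 * n1 * g2 ^ 2 + n1 * g3 ^ 2 - 3 * n2 * g1 * g2
       + N * g1 / rho p ^ 3).

Definition mu2 (p : State) : R :=
  let g1 := p G1 in let g2 := p G2 in let g3 := p G3 in
  c * (- n * g2 + 2 * n2 * g1 ^ 2 - n2 * g2 ^ 2 + n2 * g3 ^ 2 - 3 * n1 * g1 * g2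
       + N * g2 / rho p ^ 3).

Definition mu3 (p : State) : R :=
  let g1 := p G1 in let g2 := p G2 in let g3 := p G3 in
  - c * g3 * (3 * n + 5 * n1 * g1 + 5 * n2 * g2 + N * g3 / rho p).

Definition mu3' (p : State) : R :=
  let g1 := p G1 in let g2 := p G2 in let g3 := p G3 in
  - c * g3 * (3 * n + 5 * n1 * g1 + 5 * n2 * g2 - N * (g3 ^ 2 + 1) / rho p ^ 3).

Definition quadI (p : State) : R := 2 * p G1 ^ 2 + 2 * p G2 ^ 2 + p G3 ^ 2.

Definition Ufun (p : State) : R :=
  c * (a1 * p G1 + a2 * p G2) + eps / rho p
  - 1 / 2 * c * (n + n1 * p G1 + n2 * p G2 + N / rho p) ^ 2 * quadI p.

Definition I2 (p : State) : R :=
  p M1 * p G1 + p M2 * p G2 + p M3 * p G3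
  + c * (n + n1 * p G1 + n2 * p G2 + N / rho p) * quadI p.

Definition phi (p : State) : R :=
  c * (n + n1 * p G1 + n2 * p G2 + N / rho p) * quadI p.

Definition psi (p : State) : R :=
  - c * (5 * n + 7 * n1 * p G1 + 7 * n2 * p G2
         + N * (2 * rho p ^ 2 - p G3 ^ 2 - 1) / rho p ^ 3).

(* vector field: Mdot = -(I^-1 M) x (M + mu) + g x gradU,  gdot = g x I^-1 M,
   I = diag(2c,2c,c); gU1,gU2,gU3 are the components of grad_g U. *)
Definition field (gU1 gU2 gU3 : State -> R) (p : State) (i : idx) : R :=
  let w1 := p M1 / (2 * c) in let w2 := p M2 / (2 * c) in let w3 := p M3 / c in
  let b1 := p M1 + mu1 p in let b2 := p M2 + mu2 p in let b3 := p M3 + mu3 p in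
  let g1 := p G1 in let g2 := p G2 in let g3 := p G3 in
  let u1 := gU1 p in let u2 := gU2 p in let u3 := gU3 p in
  match i with
  | M1 => - (w2 * b3 - w3 * b2) + (g2 * u3 - g3 * u2)
  | M2 => - (w3 * b1 - w1 * b3) + (g3 * u1 - g1 * u3)
  | M3 => - (w1 * b2 - w2 * b1) + (g1 * u2 - g2 * u1)
  | G1 => g2 * w3 - g3 * w2
  | G2 => g3 * w1 - g1 * w3
  | G3 => g1 * w2 - g2 * w1
  end.

End Data.

(* Main.v *)
From Stdlib Require Import Nsatz.
Require Import Defs.
From Stdlib Require Import Reals Lra Lia Psatz ClassicalEpsilon FunctionalExtensionality.
Open Scope R_scope.

Lemma idx_eqb_true i j : idx_eqb i j = true <-> i = j.
Proof. destruct i, j; simpl; split; congruence. Qed.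
Lemma idx_eqb_refl i : idx_eqb i i = true.
Proof. destruct i; reflexivity. Qed.
Lemma idx_eqb_neq i j : i <> j -> idx_eqb i j = false.
Proof. destruct i, j; simpl; congruence. Qed.

Lemma upd_eq p i s : upd p i s i = s.
Proof. unfold upd; rewrite idx_eqb_refl; reflexivity. Qed.
Lemma upd_neq p i j s : j <> i -> upd p i s j = p j.
Proof. intro H; unfold upd; rewrite idx_eqb_neq; auto. Qed.
Lemma upd_same p i : upd p i (p i) = p.
Proof. apply functional_extensionality; intro j; unfold upd.
 destruct (idx_eqb j i) eqn:E; [apply idx_eqb_true in E; subst|]; auto. Qed.
Lemma upd_upd p i s t : upd (upd p i s) i t = upd p i t.
Proof. apply functional_extensionality; intro j; unfold upd.
 destruct (idx_eqb j i); auto. Qed.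
Lemma upd_comm p i k s t : i <> k -> upd (upd p i s) k t = upd (upd p k t) i s.
Proof. intro H; apply functional_extensionality; intro j; unfold upd.
 destruct (idx_eqb j k) eqn:E1; destruct (idx_eqb j i) eqn:E2; auto.
 apply idx_eqb_true in E1; apply idx_eqb_true in E2; subst; congruence. Qed.

Lemma dpl_eq f x l l' : derivable_pt_lim f x l -> l = l' -> derivable_pt_lim f x l'.
Proof. intros; subst; auto. Qed.

Inductive ex : Type :=
| eCst (a : R) | eVar (i : idx) | eAdd (a b : ex) | eMul (a b : ex) | eRinv.

Fixpoint eval (e : ex) (p : State) : R :=
  match e with
  | eCst a => a
  | eVar i => p i
  | eAdd a b => eval a p + eval b p
  | eMul a b => eval a p * eval b p
  | eRinv => / rho p
  end.

Fixpoint deriv (e : ex) (i : idx) : ex :=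
  match e with
  | eCst _ => eCst 0
  | eVar j => eCst (if idx_eqb j i then 1 else 0)
  | eAdd a b => eAdd (deriv a i) (deriv b i)
  | eMul a b => eAdd (eMul (deriv a i) b) (eMul a (deriv b i))
  | eRinv => match i with
            | G1 => eMul (eCst (-1)) (eMul (eVar G1) (eMul eRinv (eMul eRinv eRinv)))
            | G2 => eMul (eCst (-1)) (eMul (eVar G2) (eMul eRinv (eMul eRinv eRinv)))
            | _ => eCst 0
            end
  end.

Lemma rho_pos p : inD p -> 0 < rho p.
Proof. unfold inD, rho; intro H; apply sqrt_lt_R0; lra. Qed.
Lemma rho_sq p : rho p * rho p = p G1 ^ 2 + p G2 ^ 2.
Proof. unfold rho; apply sqrt_sqrt; nra. Qed.

Lemma Dplus f g x a b : derivable_pt_lim f x a -> derivable_pt_lim g x b ->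
  derivable_pt_lim (fun s => f s + g s) x (a + b).
Proof. intros; apply (derivable_pt_lim_plus f g); auto. Qed.
Lemma Dmult f g x a b : derivable_pt_lim f x a -> derivable_pt_lim g x b ->
  derivable_pt_lim (fun s => f s * g s) x (a * g x + f x * b).
Proof. intros; apply (derivable_pt_lim_mult f g); auto. Qed.
Lemma Dconst a x : derivable_pt_lim (fun _ => a) x 0.
Proof. apply (derivable_pt_lim_const a). Qed.
Lemma Dinvsqrt u x du : derivable_pt_lim u x du -> 0 < u x ->
  derivable_pt_lim (fun s => / sqrt (u s)) x (- du / (2 * sqrt (u x) * u x)).
Proof.
  intros Hu Hp.
  assert (Hs := derivable_pt_lim_comp _ _ _ _ _ Hu (derivable_pt_lim_sqrt _ Hp)).
  assert (Hr : 0 < sqrt (u x)) by (apply sqrt_lt_R0; auto).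
  assert (Hd := derivable_pt_lim_div (fct_cte 1) _ _ _ _ (derivable_pt_lim_const 1 x) Hs).
  assert (Hne : sqrt (u x) <> 0) by lra.
  specialize (Hd Hne).
  apply (derivable_pt_lim_ext (fct_cte 1 / comp sqrt u)%F).
  - intro z; unfold div_fct, fct_cte, comp; unfold Rdiv; ring.
  - eapply dpl_eq; [apply Hd|].
    unfold comp, fct_cte, Rsqr. rewrite sqrt_sqrt; [|lra]. field. lra.
Qed.

Lemma chain e (Y : R -> State) t (v : idx -> R) :
  inD (Y t) -> (forall i, derivable_pt_lim (fun s => Y s i) t (v i)) ->
  derivable_pt_lim (fun s => eval e (Y s)) t (sum6 (fun i => eval (deriv e i) (Y t) * v i)).
Proof.
  intros HD Hv. induction e; simpl.
  - eapply dpl_eq. apply (derivable_pt_lim_const a). unfold sum6; simpl; ring.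
  - eapply dpl_eq. apply Hv. destruct i; unfold sum6; simpl; ring.
  - eapply dpl_eq. apply (derivable_pt_lim_plus _ _ _ _ _ IHe1 IHe2).
    unfold sum6; simpl; ring.
  - eapply dpl_eq. apply (derivable_pt_lim_mult _ _ _ _ _ IHe1 IHe2).
    unfold sum6; simpl; ring.
  - assert (Hu : derivable_pt_lim (fun s => Y s G1 ^ 2 + Y s G2 ^ 2) t
                    (2 * Y t G1 * v G1 + 2 * Y t G2 * v G2)).
    { eapply dpl_eq. apply Dplus; simpl; repeat apply Dmult; auto using Dconst. simpl; ring. }
    eapply dpl_eq. apply (Dinvsqrt _ _ _ Hu HD).
    cbv beta. match goal with |- context [sqrt ?a] => set (r := sqrt a) end.
    assert (Er : r = rho (Y t)) by reflexivity. rewrite Er.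
    assert (Hr := rho_pos _ HD). assert (Hr2 := rho_sq (Y t)).
    rewrite <- Hr2. unfold sum6; simpl. field. lra.
Qed.

Lemma partial_eval e p i : inD p -> partial (eval e) i p (eval (deriv e i) p).
Proof.
  intro HD. unfold partial.
  assert (H := chain e (fun s => upd p i s) (p i) (fun j => if idx_eqb j i then 1 else 0)).
  rewrite upd_same in H. eapply dpl_eq; [apply H; auto|].
  - intro j. unfold upd. destruct (idx_eqb j i).
    + apply derivable_pt_lim_id.
    + apply Dconst.
  - destruct i; unfold sum6; simpl; ring.
Qed.

Definition sdist (q q' : State) : R := sum6 (fun j => Rabs (q j - q' j)).
Definition box (p0 : State) (r : R) (q : State) : Prop := forall j, Rabs (q j - p0 j) <= r.

Lemma abs_split x a : Rabs x <= a -> - a <= x <= a.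
Proof. unfold Rabs; destruct (Rcase_abs x); lra. Qed.
Lemma abs_split_lt x a : Rabs x < a -> - a < x < a.
Proof. unfold Rabs; destruct (Rcase_abs x); lra. Qed.

Lemma dist_ge q q' j : Rabs (q j - q' j) <= sdist q q'.
Proof. unfold sdist, sum6. assert (H := fun k => Rabs_pos (q k - q' k)).
  destruct j; specialize (H M1) as H1; specialize (H M2) as H2; specialize (H M3) as H3;
  specialize (H G1) as H4; specialize (H G2) as H5; specialize (H G3) as H6; lra. Qed.

Lemma abs_le_sqrt a b : Rabs a <= sqrt (a ^ 2 + b ^ 2).
Proof. rewrite <- sqrt_Rsqr_abs. apply sqrt_le_1_alt. unfold Rsqr; nra. Qed.

Lemma sqrt_lip a b c d :
  Rabs (sqrt (a ^ 2 + b ^ 2) - sqrt (c ^ 2 + d ^ 2)) <= Rabs (a - c) + Rabs (b - d).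
Proof.
  set (x := sqrt (a ^ 2 + b ^ 2)); set (y := sqrt (c ^ 2 + d ^ 2)).
  assert (Hx : 0 <= x) by apply sqrt_pos. assert (Hy : 0 <= y) by apply sqrt_pos.
  assert (Hx2 : x * x = a ^ 2 + b ^ 2) by (apply sqrt_sqrt; nra).
  assert (Hy2 : y * y = c ^ 2 + d ^ 2) by (apply sqrt_sqrt; nra).
  assert (Ha : Rabs a <= x) by apply abs_le_sqrt.
  assert (Hb : Rabs b <= x) by (unfold x; rewrite Rplus_comm; apply abs_le_sqrt).
  assert (Hc : Rabs c <= y) by apply abs_le_sqrt.
  assert (Hd : Rabs d <= y) by (unfold y; rewrite Rplus_comm; apply abs_le_sqrt).
  destruct (Req_dec (x + y) 0) as [E|E].
  { assert (x = 0) by lra. assert (y = 0) by lra.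
    replace (x - y) with 0 by lra. rewrite Rabs_R0.
    assert (H1 := Rabs_pos (a - c)); assert (H2 := Rabs_pos (b - d)); lra. }
  assert (Hp : 0 < x + y) by lra.
  apply Rmult_le_reg_r with (x + y); auto.
  rewrite <- (Rabs_pos_eq (x + y)) at 1 by lra. rewrite <- Rabs_mult.
  replace ((x - y) * (x + y)) with ((a - c) * (a + c) + (b - d) * (b + d)) by nra.
  eapply Rle_trans; [apply Rabs_triang|]. rewrite !Rabs_mult.
  assert (Hac : Rabs (a + c) <= x + y) by (eapply Rle_trans; [apply Rabs_triang|lra]).
  assert (Hbd : Rabs (b + d) <= x + y) by (eapply Rle_trans; [apply Rabs_triang|lra]).
  assert (H1 := Rabs_pos (a - c)); assert (H2 := Rabs_pos (b - d)).
  nra.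
Qed.

Lemma rho_lip q q' : Rabs (rho q - rho q') <= sdist q q'.
Proof.
  eapply Rle_trans; [apply sqrt_lip|]. unfold sdist, sum6.
  assert (H := fun k => Rabs_pos (q k - q' k)).
  specialize (H M1) as H1; specialize (H M2) as H2; specialize (H M3) as H3;
  specialize (H G3) as H6; lra.
Qed.

Lemma rho_box p0 r q : 4 * r <= rho p0 -> box p0 r q -> rho p0 / 2 <= rho q.
Proof.
  intros Hr Hb. assert (H := sqrt_lip (q G1) (q G2) (p0 G1) (p0 G2)).
  fold (rho q) in H; fold (rho p0) in H.
  assert (H1 := Hb G1); assert (H2 := Hb G2).
  apply abs_split in H. lra.
Qed.

Lemma dist_pos q q' : 0 <= sdist q q'.
Proof. unfold sdist, sum6. assert (H := fun k => Rabs_pos (q k - q' k)).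
  specialize (H M1) as H1; specialize (H M2) as H2; specialize (H M3) as H3;
  specialize (H G1) as H4; specialize (H G2) as H5; specialize (H G3) as H6; lra. Qed.

Lemma lip e p0 r : 0 < rho p0 -> 0 < r -> 4 * r <= rho p0 ->
  exists K L, 0 <= K /\ 0 <= L /\ forall q q', box p0 r q -> box p0 r q' ->
    Rabs (eval e q) <= K /\ Rabs (eval e q - eval e q') <= L * sdist q q'.
Proof.
  intros Hr0 Hr Hr4. induction e; simpl.
  - exists (Rabs a), 0. split; [apply Rabs_pos|split; [lra|]]. intros q q' _ _. split; [lra|].
    replace (a - a) with 0 by ring. rewrite Rabs_R0. nra.
  - exists (Rabs (p0 i) + r), 1. split; [|split; [lra|]].
    + assert (H := Rabs_pos (p0 i)); lra.
    + intros q q' Hq Hq'. split.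
      * replace (q i) with ((q i - p0 i) + p0 i) by ring.
        eapply Rle_trans; [apply Rabs_triang|]. specialize (Hq i); lra.
      * rewrite Rmult_1_l; apply dist_ge.
  - destruct IHe1 as (K1 & L1 & HK1 & HL1 & H1). destruct IHe2 as (K2 & L2 & HK2 & HL2 & H2).
    exists (K1 + K2), (L1 + L2). split; [lra|split; [lra|]].
    + intros q q' Hq Hq'. destruct (H1 q q' Hq Hq'), (H2 q q' Hq Hq'). split.
      * eapply Rle_trans; [apply Rabs_triang|]. lra.
      * replace (eval e1 q + eval e2 q - (eval e1 q' + eval e2 q')) with
          ((eval e1 q - eval e1 q') + (eval e2 q - eval e2 q')) by ring.
        eapply Rle_trans; [apply Rabs_triang|]. lra.
  - destruct IHe1 as (K1 & L1 & HK1 & HL1 & H1). destruct IHe2 as (K2 & L2 & HK2 & HL2 & H2).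
    exists (K1 * K2), (K1 * L2 + K2 * L1). split; [nra|split; [nra|]].
    + intros q q' Hq Hq'. destruct (H1 q q' Hq Hq') as [A1 B1]. destruct (H2 q q' Hq Hq') as [A2 B2].
      destruct (H1 q' q' Hq' Hq') as [A1' _]. destruct (H2 q' q' Hq' Hq') as [A2' _].
      assert (Hd := dist_pos q q'). split.
      * rewrite Rabs_mult. apply Rmult_le_compat; auto using Rabs_pos.
      * replace (eval e1 q * eval e2 q - eval e1 q' * eval e2 q') with
          (eval e1 q * (eval e2 q - eval e2 q') + (eval e1 q - eval e1 q') * eval e2 q') by ring.
        eapply Rle_trans; [apply Rabs_triang|]. rewrite !Rabs_mult.
        assert (E1 : Rabs (eval e1 q) * Rabs (eval e2 q - eval e2 q') <= K1 * (L2 * sdist q q'))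
          by (apply Rmult_le_compat; auto using Rabs_pos).
        assert (E2 : Rabs (eval e1 q - eval e1 q') * Rabs (eval e2 q') <= (L1 * sdist q q') * K2)
          by (apply Rmult_le_compat; auto using Rabs_pos).
        nra.
  - exists (2 / rho p0), (4 / (rho p0 * rho p0)). split; [|split].
    + apply Rlt_le; apply Rdiv_lt_0_compat; lra.
    + apply Rlt_le; apply Rdiv_lt_0_compat; nra.
    + intros q q' Hq Hq'. assert (Ha := rho_box _ _ _ Hr4 Hq). assert (Hb := rho_box _ _ _ Hr4 Hq').
      assert (Hl := rho_lip q q'). split.
      * rewrite Rabs_pos_eq by (apply Rlt_le, Rinv_0_lt_compat; lra).
        apply Rmult_le_reg_l with (rho q); [lra|]. rewrite Rinv_r by lra.
        apply Rmult_le_reg_l with (rho p0); [lra|].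
        replace (rho p0 * (rho q * (2 / rho p0))) with (2 * rho q) by (field; lra). lra.
      * replace (/ rho q - / rho q') with ((rho q' - rho q) / (rho q * rho q')) by (field; lra).
        unfold Rdiv. rewrite Rabs_mult. rewrite (Rabs_pos_eq (/ _)) by
          (apply Rlt_le, Rinv_0_lt_compat; nra).
        rewrite <- Rabs_Ropp. replace (- (rho q' - rho q)) with (rho q - rho q') by ring.
        assert (Hi : / (rho q * rho q') <= 4 / (rho p0 * rho p0)).
        { apply Rmult_le_reg_l with (rho q * rho q'); [nra|]. rewrite Rinv_r by nra.
          apply Rmult_le_reg_l with (rho p0 * rho p0); [nra|].
          replace (rho p0 * rho p0 * (rho q * rho q' * (4 / (rho p0 * rho p0))))
            with (4 * (rho q * rho q')) by (field; lra). nra. }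
        assert (H0 := Rabs_pos (rho q - rho q')).
        assert (Hi0 : 0 <= / (rho q * rho q')) by (apply Rlt_le, Rinv_0_lt_compat; nra).
        rewrite Rmult_comm. apply Rmult_le_compat; auto.
Qed.

Lemma cont_eval e : cont_on inD (eval e).
Proof.
  intros p Hp eps He. assert (Hr := rho_pos p Hp).
  destruct (lip e p (rho p / 4)) as (K & L & HK & HL & H); try lra.
  exists (Rmin (rho p / 4) (eps / (6 * (L + 1)))). split.
  - apply Rmin_pos; [lra|]. apply Rdiv_lt_0_compat; lra.
  - intros q Hq Hqp.
    assert (Hm1 := Rmin_l (rho p / 4) (eps / (6 * (L + 1)))).
    assert (Hm2 := Rmin_r (rho p / 4) (eps / (6 * (L + 1)))).
    assert (Bq : box p (rho p / 4) q) by (intro j; specialize (Hqp j); lra).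
    assert (Bp : box p (rho p / 4) p) by (intro j; replace (p j - p j) with 0 by ring; rewrite Rabs_R0; lra).
    destruct (H q p Bq Bp) as [_ Hl].
    assert (Hd : sdist q p <= 6 * (eps / (6 * (L + 1)))).
    { unfold sdist, sum6. generalize (Hqp M1) (Hqp M2) (Hqp M3) (Hqp G1) (Hqp G2) (Hqp G3). lra. }
    assert (L * sdist q p <= L * (6 * (eps / (6 * (L + 1))))) by (apply Rmult_le_compat_l; auto).
    assert (L * (6 * (eps / (6 * (L + 1)))) < eps).
    { replace (L * (6 * (eps / (6 * (L + 1))))) with (eps * (L / (L + 1))) by (field; lra).
      assert (L / (L + 1) < 1). { apply Rmult_lt_reg_r with (L + 1); [lra|].
        unfold Rdiv; rewrite Rmult_assoc, Rinv_l by lra. lra. }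
      nra. }
    lra.
Qed.

Lemma Ck_eval : forall k e, Ck inD k (eval e).
Proof.
  induction k; intro e; simpl.
  - apply cont_eval.
  - exists (fun p i => eval (deriv e i) p). split.
    + intros p Hp i. apply partial_eval; auto.
    + intro i. apply IHk.
Qed.

Lemma smooth_eval e : smooth inD (eval e).
Proof. intro k; apply Ck_eval. Qed.

Definition gE1 := eVar G1. Definition gE2 := eVar G2. Definition gE3 := eVar G3.
Definition mE1 := eVar M1. Definition mE2 := eVar M2. Definition mE3 := eVar M3.
Definition sE (a b : ex) := eAdd a (eMul (eCst (-1)) b).
Definition cube e := eMul e (eMul e e).
Definition sq e := eMul e e.

Section E.
Variables (c N n n1 n2 a1 a2 eps : R).

Definition mu1e : ex := eMul (eCst c)
  (eAdd (eAdd (eAdd (eAdd (eAdd (eMul (eCst (- n)) gE1) (eMul (eCst (- n1)) (sq gE1)))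
       (eMul (eCst (2 * n1)) (sq gE2))) (eMul (eCst n1) (sq gE3)))
       (eMul (eCst (- 3 * n2)) (eMul gE1 gE2))) (eMul (eCst N) (eMul gE1 (cube eRinv)))).
Definition mu2e : ex := eMul (eCst c)
  (eAdd (eAdd (eAdd (eAdd (eAdd (eMul (eCst (- n)) gE2) (eMul (eCst (2 * n2)) (sq gE1)))
       (eMul (eCst (- n2)) (sq gE2))) (eMul (eCst n2) (sq gE3)))
       (eMul (eCst (- 3 * n1)) (eMul gE1 gE2))) (eMul (eCst N) (eMul gE2 (cube eRinv)))).
Definition mu3pe : ex := eMul (eCst (- c)) (eMul gE3
  (eAdd (eAdd (eAdd (eCst (3 * n)) (eMul (eCst (5 * n1)) gE1)) (eMul (eCst (5 * n2)) gE2))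
       (eMul (eCst (- N)) (eMul (eAdd (sq gE3) (eCst 1)) (cube eRinv))))).
Definition mu3e : ex := eMul (eCst (- c)) (eMul gE3
  (eAdd (eAdd (eAdd (eCst (3 * n)) (eMul (eCst (5 * n1)) gE1)) (eMul (eCst (5 * n2)) gE2))
       (eMul (eCst N) (eMul gE3 eRinv)))).
Definition Qe : ex := eAdd (eAdd (eMul (eCst 2) (sq gE1)) (eMul (eCst 2) (sq gE2))) (sq gE3).
Definition Fe : ex := eAdd (eAdd (eAdd (eCst n) (eMul (eCst n1) gE1)) (eMul (eCst n2) gE2)) (eMul (eCst N) eRinv).
Definition phie : ex := eMul (eCst c) (eMul Fe Qe).
Definition I2e : ex := eAdd (eAdd (eAdd (eMul mE1 gE1) (eMul mE2 gE2)) (eMul mE3 gE3)) phie.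
Definition Ue : ex := eAdd (eAdd (eMul (eCst c) (eAdd (eMul (eCst a1) gE1) (eMul (eCst a2) gE2)))
   (eMul (eCst eps) eRinv)) (eMul (eCst (- 1 / 2 * c)) (eMul (sq Fe) Qe)).

Lemma mu1_eq : mu1 c N n n1 n2 = eval mu1e.
Proof. apply functional_extensionality; intro p; unfold mu1; cbv zeta.
  unfold Rdiv; rewrite <- pow_inv; simpl; ring. Qed.
Lemma mu2_eq : mu2 c N n n1 n2 = eval mu2e.
Proof. apply functional_extensionality; intro p; unfold mu2; cbv zeta.
  unfold Rdiv; rewrite <- pow_inv; simpl; ring. Qed.
Lemma mu3'_eq : mu3' c N n n1 n2 = eval mu3pe.
Proof. apply functional_extensionality; intro p; unfold mu3'; cbv zeta.
  unfold Rdiv; rewrite <- pow_inv; simpl; ring. Qed.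
Lemma mu3_eq : mu3 c N n n1 n2 = eval mu3e.
Proof. apply functional_extensionality; intro p; unfold mu3; simpl.
  unfold Rdiv; simpl; ring. Qed.
Lemma phi_eq : phi c N n n1 n2 = eval phie.
Proof. apply functional_extensionality; intro p; unfold phi, quadI; simpl.
  unfold Rdiv; simpl; ring. Qed.
Lemma I2_eq : I2 c N n n1 n2 = eval I2e.
Proof. apply functional_extensionality; intro p; unfold I2, quadI; simpl.
  unfold Rdiv; simpl; ring. Qed.
Lemma U_eq : Ufun c N n n1 n2 a1 a2 eps = eval Ue.
Proof. apply functional_extensionality; intro p; unfold Ufun, quadI; simpl.
  unfold Rdiv; simpl; ring. Qed.

Ltac rsolve p HD :=
  let Hr := fresh "Hr" in let Hr2 := fresh "Hr2" in let Hs := fresh "Hs" in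
  assert (Hr := rho_pos p HD); assert (Hr2 := rho_sq p); simpl in Hr2;
  rewrite ?Rmult_1_r in Hr2; set (r := rho p) in *; unfold Rdiv;
  rewrite ?Rinv_mult, ?Rinv_1;
  assert (Hs : r * / r = 1) by (field; lra); set (s := / r) in *; nsatz.

Lemma partb1 p : inD p -> eval (deriv phie G1) p = mu1 c N n n1 n2 p - psi c N n n1 n2 p * p G1.
Proof. intro HD. unfold mu1, psi; simpl. rsolve p HD. Qed.
Lemma partb2 p : inD p -> eval (deriv phie G2) p = mu2 c N n n1 n2 p - psi c N n n1 n2 p * p G2.
Proof. intro HD. unfold mu2, psi; simpl. rsolve p HD. Qed.
Lemma partb3 p : inD p -> eval (deriv phie G3) p = mu3' c N n n1 n2 p - psi c N n n1 n2 p * p G3.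
Proof. intro HD. unfold mu3', psi; simpl. rsolve p HD. Qed.

Lemma casimir_rows p i : inD p ->
  sum6 (fun j => Pi (mu1 c N n n1 n2) (mu2 c N n n1 n2) (mu3' c N n n1 n2) p i j
                 * eval (deriv I2e j) p) = 0.
Proof.
  intro HD. rewrite mu1_eq, mu2_eq, mu3'_eq. unfold sum6, Pi.
  destruct i; simpl; rsolve p HD.
Qed.
End E.

Lemma grad_unique f i p l1 l2 : partial f i p l1 -> partial f i p l2 -> l1 = l2.
Proof. apply uniqueness_limite. Qed.

Lemma Dsum6 (F : idx -> R -> R) d x :
  (forall j, derivable_pt_lim (F j) x (d j)) ->
  derivable_pt_lim (fun s => sum6 (fun j => F j s)) x (sum6 d).
Proof.
  intro H. unfold sum6.
  repeat apply Dplus; apply H.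
Qed.

Lemma box_inD p r q : inD p -> 0 <= r -> 4 * r <= rho p -> box p r q -> inD q.
Proof.
  intros HD Hr Hr4 Hb. assert (Hp := rho_pos p HD). assert (H := rho_box p r q Hr4 Hb).
  unfold inD. assert (Hq := rho_sq q). nra.
Qed.

Lemma box_upd p r i z : 0 <= r -> Rabs (z - p i) <= r -> box p r (upd p i z).
Proof.
  intros Hr Hz j. unfold upd. destruct (idx_eqb j i) eqn:E.
  - apply idx_eqb_true in E; subst; auto.
  - replace (p j - p j) with 0 by ring. rewrite Rabs_R0; auto.
Qed.

Lemma partial_local g1 g2 i p l : inD p -> (forall q, inD q -> g1 q = g2 q) ->
  partial g1 i p l -> partial g2 i p l.
Proof.
  intros HD Heq H. unfold partial in *. assert (Hp := rho_pos p HD).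
  apply (derivable_pt_lim_locally_ext (fun s => g1 (upd p i s)) (fun s => g2 (upd p i s)) _ (p i - rho p / 4) (p i + rho p / 4) _); [lra| |auto].
  intros z Hz. cbv beta. apply Heq. apply (box_inD p (rho p / 4)); [auto|lra|lra|].
  apply box_upd; [lra|]. apply Rabs_le; lra.
Qed.

Lemma line_deriv g q j l s0 a : partial g j q l -> q j = a + s0 ->
  derivable_pt_lim (fun s => g (upd q j (a + s))) s0 l.
Proof.
  intros H E. unfold partial in H. rewrite E in H.
  assert (Hi : derivable_pt_lim (fun s => a + s) s0 1).
  { eapply dpl_eq; [apply (Dplus (fun _ => a) (fun s => s) s0 0 1); [apply Dconst|apply derivable_pt_lim_id]|]; ring. }
  eapply dpl_eq; [apply (derivable_pt_lim_comp _ _ _ _ _ Hi H)|]. ring.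
Qed.

Lemma eps_eq x y : (forall e, 0 < e -> Rabs (x - y) < 2 * e) -> x = y.
Proof.
  intro H. destruct (Req_dec x y) as [E|E]; auto.
  assert (Hp : 0 < Rabs (x - y)) by (apply Rabs_pos_lt; lra).
  specialize (H (Rabs (x - y) / 2) ltac:(lra)). lra.
Qed.

Definition idx_eq_dec (i j : idx) : {i = j} + {i <> j}.
Proof. decide equality. Defined.

Section Schwarz.
Variables (f : State -> R) (D : State -> idx -> R) (H : State -> idx -> idx -> R).
Hypothesis HG : is_grad inD f D.
Hypothesis HH : forall j, is_grad inD (fun q => D q j) (fun q l => H q j l).
Hypothesis HC : forall j l, cont_on inD (fun q => H q j l).

Variables (p : State) (i k : idx).
Hypothesis HD : inD p.
Hypothesis Hik : i <> k.

Definition Pt s t := upd (upd p i (p i + s)) k (p k + t).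

Lemma Pt_i s t : Pt s t i = p i + s.
Proof. unfold Pt. rewrite upd_neq by auto. apply upd_eq. Qed.
Lemma Pt_k s t : Pt s t k = p k + t.
Proof. unfold Pt. apply upd_eq. Qed.
Lemma Pt_o s t j : j <> i -> j <> k -> Pt s t j = p j.
Proof. intros; unfold Pt. rewrite !upd_neq; auto. Qed.

Lemma Pt_s s s0 t : Pt s t = upd (Pt s0 t) i (p i + s).
Proof. unfold Pt. rewrite (upd_comm _ k i) by auto. rewrite upd_upd. reflexivity. Qed.
Lemma Pt_t s t t0 : Pt s t = upd (Pt s t0) k (p k + t).
Proof. unfold Pt. rewrite upd_upd. auto. Qed.

Let r0 := rho p / 4.
Lemma r0_pos : 0 < r0.
Proof. unfold r0; assert (H0 := rho_pos p HD); lra. Qed.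

Lemma Pt_in s t : Rabs s <= r0 -> Rabs t <= r0 -> inD (Pt s t).
Proof.
  intros Hs Ht. apply (box_inD p r0); auto; [apply Rlt_le, r0_pos|unfold r0; lra|].
  intro j. destruct (idx_eq_dec j i) as [->|Ei].
  - rewrite Pt_i. replace (p i + s - p i) with s by ring. auto.
  - destruct (idx_eq_dec j k) as [->|Ek].
    + rewrite Pt_k. replace (p k + t - p k) with t by ring. auto.
    + rewrite Pt_o by auto. replace (p j - p j) with 0 by ring. rewrite Rabs_R0.
      apply Rlt_le, r0_pos.
Qed.

Lemma d_s (g : State -> R) (G : State -> idx -> R) j s0 t :
  is_grad inD g G -> Rabs s0 <= r0 -> Rabs t <= r0 -> j = i ->
  derivable_pt_lim (fun s => g (Pt s t)) s0 (G (Pt s0 t) j).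
Proof.
  intros HgG Hs Ht ->.
  apply (derivable_pt_lim_ext (fun s => g (upd (Pt s0 t) i (p i + s)))).
  - intro z; rewrite <- Pt_s; auto.
  - apply line_deriv. apply HgG. apply Pt_in; auto. apply Pt_i.
Qed.
Lemma d_t (g : State -> R) (G : State -> idx -> R) j s t0 :
  is_grad inD g G -> Rabs s <= r0 -> Rabs t0 <= r0 -> j = k ->
  derivable_pt_lim (fun t => g (Pt s t)) t0 (G (Pt s t0) j).
Proof.
  intros HgG Hs Ht ->.
  apply (derivable_pt_lim_ext (fun t => g (upd (Pt s t0) k (p k + t)))).
  - intro z; rewrite <- Pt_t; auto.
  - apply line_deriv. apply HgG. apply Pt_in; auto. apply Pt_k.
Qed.

Definition Dlt h := f (Pt h h) - f (Pt h 0) - f (Pt 0 h) + f (Pt 0 0).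

Lemma absle x a : 0 <= x <= a -> Rabs x <= a.
Proof. intro; rewrite Rabs_pos_eq; lra. Qed.

Lemma DeltaA h : 0 < h <= r0 -> exists xi eta, 0 < xi < h /\ 0 < eta < h /\ Dlt h = h * h * H (Pt xi eta) i k.
Proof.
  intros Hh.
  destruct (MVT_cor2 (fun s => f (Pt s h) - f (Pt s 0))
              (fun s => D (Pt s h) i - D (Pt s 0) i) 0 h) as [xi [E1 Hxi]]; [lra| |].
  { intros s Hs. apply derivable_pt_lim_minus; apply d_s; auto; apply absle; lra. }
  destruct (MVT_cor2 (fun t => D (Pt xi t) i) (fun t => H (Pt xi t) i k) 0 h) as [eta [E2 Heta]]; [lra| |].
  { intros t Ht. apply (d_t (fun q => D q i) (fun q l => H q i l)); auto; apply absle; lra. }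
  exists xi, eta. split; [lra|split; [lra|]].
  unfold Dlt. cbv beta in E1, E2.
  replace (f (Pt h h) - f (Pt h 0) - f (Pt 0 h) + f (Pt 0 0)) with
    ((f (Pt h h) - f (Pt h 0)) - (f (Pt 0 h) - f (Pt 0 0))) by ring.
  rewrite E1. rewrite E2. ring.
Qed.

Lemma DeltaB h : 0 < h <= r0 -> exists xi eta, 0 < xi < h /\ 0 < eta < h /\ Dlt h = h * h * H (Pt xi eta) k i.
Proof.
  intros Hh.
  destruct (MVT_cor2 (fun t => f (Pt h t) - f (Pt 0 t))
              (fun t => D (Pt h t) k - D (Pt 0 t) k) 0 h) as [eta [E1 Heta]]; [lra| |].
  { intros t Ht. apply derivable_pt_lim_minus; apply d_t; auto; apply absle; lra. }
  destruct (MVT_cor2 (fun s => D (Pt s eta) k) (fun s => H (Pt s eta) k i) 0 h) as [xi [E2 Hxi]]; [lra| |].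
  { intros s Hs. apply (d_s (fun q => D q k) (fun q l => H q k l)); auto; apply absle; lra. }
  exists xi, eta. split; [lra|split; [lra|]].
  unfold Dlt. cbv beta in E1, E2.
  replace (f (Pt h h) - f (Pt h 0) - f (Pt 0 h) + f (Pt 0 0)) with
    ((f (Pt h h) - f (Pt 0 h)) - (f (Pt h 0) - f (Pt 0 0))) by ring.
  rewrite E1. rewrite E2. ring.
Qed.

Lemma Pt_close xi eta d : 0 < d -> 0 <= xi < d -> 0 <= eta < d ->
  forall j, Rabs (Pt xi eta j - p j) < d.
Proof.
  intros Hd Hx He j. destruct (idx_eq_dec j i) as [->|Ei].
  - rewrite Pt_i. replace (p i + xi - p i) with xi by ring. rewrite Rabs_pos_eq; lra.
  - destruct (idx_eq_dec j k) as [->|Ek].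
    + rewrite Pt_k. replace (p k + eta - p k) with eta by ring. rewrite Rabs_pos_eq; lra.
    + rewrite Pt_o by auto. replace (p j - p j) with 0 by ring. rewrite Rabs_R0. lra.
Qed.

Lemma schwarz_ne : H p i k = H p k i.
Proof.
  apply eps_eq. intros e He.
  destruct (HC i k p HD e He) as [d1 [Hd1 C1]].
  destruct (HC k i p HD e He) as [d2 [Hd2 C2]].
  assert (Hr := r0_pos).
  set (h := Rmin r0 (Rmin d1 d2)).
  assert (Hh1 : h <= r0) by apply Rmin_l.
  assert (Hh2 : h <= d1) by (eapply Rle_trans; [apply Rmin_r|apply Rmin_l]).
  assert (Hh3 : h <= d2) by (eapply Rle_trans; [apply Rmin_r|apply Rmin_r]).
  assert (Hh0 : 0 < h) by (apply Rmin_pos; [auto|apply Rmin_pos; auto]).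
  destruct (DeltaA h) as (x1 & y1 & Hx1 & Hy1 & EA); [lra|].
  destruct (DeltaB h) as (x2 & y2 & Hx2 & Hy2 & EB); [lra|].
  assert (E : H (Pt x1 y1) i k = H (Pt x2 y2) k i).
  { apply Rmult_eq_reg_l with (h * h); [|nra]. rewrite <- EA, <- EB; auto. }
  assert (A1 := C1 (Pt x1 y1) (Pt_in x1 y1 ltac:(apply absle; lra) ltac:(apply absle; lra))
                  (Pt_close x1 y1 d1 Hd1 ltac:(lra) ltac:(lra))).
  assert (A2 := C2 (Pt x2 y2) (Pt_in x2 y2 ltac:(apply absle; lra) ltac:(apply absle; lra))
                  (Pt_close x2 y2 d2 Hd2 ltac:(lra) ltac:(lra))).
  cbv beta in A1, A2. rewrite E in A1.
  apply abs_split_lt in A1. apply abs_split_lt in A2. apply Rabs_def1; lra.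
Qed.
End Schwarz.

Lemma schwarz f D H p i k : is_grad inD f D ->
  (forall j, is_grad inD (fun q => D q j) (fun q l => H q j l)) ->
  (forall j l, cont_on inD (fun q => H q j l)) -> inD p -> H p i k = H p k i.
Proof.
  intros HG HH HC HD. destruct (idx_eq_dec i k) as [->|E]; auto.
  apply (schwarz_ne f D H HG HH HC p i k HD E).
Qed.

Lemma hess_of_smooth f df : smooth inD f -> is_grad inD f df ->
  exists (H : State -> idx -> idx -> R),
    (forall p, inD p -> forall i k, partial (fun q => df q i) k p (H p i k)) /\
    (forall p, inD p -> forall i k, H p i k = H p k i).
Proof.
  intros Hs Hg. destruct (Hs 2%nat) as [df0 [G0 Hc]].
  destruct (choice (fun (i : idx) (dd : State -> idx -> R) =>
      is_grad inD (fun p => df0 p i) dd /\ forall j, Ck inD 0 (fun p => dd p j))) as [dd Hdd].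
  { intro i. destruct (Hc i) as [dd [A B]]. exists dd; split; auto. }
  assert (Eq : forall q, inD q -> forall i, df q i = df0 q i).
  { intros q Hq i. eapply grad_unique; [apply Hg|apply G0]; auto. }
  exists (fun p i k => dd i p k). split.
  - intros p Hp i k. apply (partial_local (fun q => df0 q i)); auto.
    + intros q Hq; rewrite Eq; auto.
    + apply (proj1 (Hdd i)); auto.
  - intros p Hp i k. apply (schwarz f df0 (fun q j l => dd j q l)); auto.
    + intro j. apply (proj1 (Hdd j)).
    + intros j l. apply (proj2 (Hdd j)).
Qed.

Lemma sum6_ext F G : (forall j, F j = G j) -> sum6 F = sum6 G.
Proof. intro H; unfold sum6; rewrite !H; reflexivity. Qed.

Definition mv (P : idx -> idx -> R) (b : idx -> R) k := sum6 (fun l => P k l * b l).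
Definition vm (a : idx -> R) (P : idx -> idx -> R) l := sum6 (fun k => a k * P k l).

Lemma bracket_partial (P : State -> idx -> idx -> R) df dg p i (Hf Hg : idx -> R) (DP : idx -> idx -> R) :
  (forall k, partial (fun q => df q k) i p (Hf k)) ->
  (forall l, partial (fun q => dg q l) i p (Hg l)) ->
  (forall k l, partial (fun q => P q k l) i p (DP k l)) ->
  partial (bracket P df dg) i p
    (sum6 (fun k => Hf k * mv (P p) (dg p) k)
     + sum6 (fun k => sum6 (fun l => df p k * DP k l * dg p l))
     + sum6 (fun l => vm (df p) (P p) l * Hg l)).
Proof.
  intros H1 H2 H3. unfold partial, bracket.
  eapply dpl_eq.
  - apply (Dsum6 (fun k s => sum6 (fun l => df (upd p i s) k * P (upd p i s) k l * dg (upd p i s) l))).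
    intro k. apply (Dsum6 (fun l s => df (upd p i s) k * P (upd p i s) k l * dg (upd p i s) l)).
    intro l. apply Dmult; [apply Dmult|]; [apply H1|apply H3|apply H2].
  - cbv beta. rewrite upd_same. unfold mv, vm, sum6. ring.
Qed.

Section Alg.
Variables (P : idx -> idx -> R) (DP : idx -> idx -> idx -> R).
Hypothesis Hskew : forall i j, P i j = - P j i.

Definition sv (a b : idx -> R) i := sum6 (fun k => sum6 (fun l => a k * DP i k l * b l)).
Definition Sst (a b c : idx -> R) := sum6 (fun i => sv a b i * mv P c i).
Definition brdv (A : idx -> idx -> R) (a : idx -> R) (B : idx -> idx -> R) (b : idx -> R) i :=
  sum6 (fun k => A k i * mv P b k) + sv a b i + sum6 (fun l => vm a P l * B l i).

Lemma vm_skew a l : vm a P l = - mv P a l.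
Proof. unfold vm, mv, sum6. rewrite !(Hskew _ l). ring. Qed.

Lemma sum_mv u c : sum6 (fun i => sum6 (fun j => u i * P i j * c j)) = sum6 (fun i => u i * mv P c i).
Proof. unfold mv, sum6; ring. Qed.

Lemma hess_pair (A : idx -> idx -> R) (x y : idx -> R) : (forall i j, A i j = A j i) ->
  sum6 (fun i => sum6 (fun k => A k i * x k) * y i) - sum6 (fun i => sum6 (fun l => y l * A l i) * x i) = 0.
Proof.
  intro HA. unfold sum6.
  rewrite (HA M2 M1), (HA M3 M1), (HA M3 M2), (HA G1 M1), (HA G1 M2), (HA G1 M3),
   (HA G2 M1), (HA G2 M2), (HA G2 M3), (HA G2 G1), (HA G3 M1), (HA G3 M2), (HA G3 M3), (HA G3 G1), (HA G3 G2).
  ring.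
Qed.

Lemma jacobi_alg (a b c u v w : idx -> R) (A B C : idx -> idx -> R) :
  (forall i j, A i j = A j i) -> (forall i j, B i j = B j i) -> (forall i j, C i j = C j i) ->
  Sst a b c + Sst b c a + Sst c a b = 0 ->
  (forall i, u i = brdv A a B b i) -> (forall i, v i = brdv B b C c i) -> (forall i, w i = brdv C c A a i) ->
  sum6 (fun i => sum6 (fun j => u i * P i j * c j)) + sum6 (fun i => sum6 (fun j => v i * P i j * a j))
  + sum6 (fun i => sum6 (fun j => w i * P i j * b j)) = 0.
Proof.
  intros HA HB HC HS Hu Hv Hw.
  rewrite !sum_mv. rewrite (sum6_ext _ _ (fun i => f_equal (fun x => x * _) (Hu i))).
  rewrite (sum6_ext (fun i => v i * _) _ (fun i => f_equal (fun x => x * _) (Hv i))).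
  rewrite (sum6_ext (fun i => w i * _) _ (fun i => f_equal (fun x => x * _) (Hw i))).
  unfold brdv.
  assert (EA := hess_pair A (mv P b) (mv P c) HA).
  assert (EB := hess_pair B (mv P c) (mv P a) HB).
  assert (EC := hess_pair C (mv P a) (mv P b) HC).
  unfold Sst in HS.
  assert (Ev : forall (x : idx -> R) (y : idx) (B : idx -> idx -> R), sum6 (fun l => vm x P l * B l y) = - sum6 (fun l => mv P x l * B l y)).
  { intros. unfold sum6. rewrite !vm_skew. ring. }
  clear Ev. unfold sum6 in *. rewrite !vm_skew.
  revert EA EB EC HS. generalize (mv P a) (mv P b) (mv P c). intros pa pb pc EA EB EC HS.
  lra.
Qed.
End Alg.

Section EP.
Variables (c N n n1 n2 : R).

Definition neg e := eMul (eCst (-1)) e.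
Definition Pe (k l : idx) : ex :=
  let a1 := eAdd mE1 (mu1e c N n n1 n2) in let a2 := eAdd mE2 (mu2e c N n n1 n2) in
  let a3 := eAdd mE3 (mu3pe c N n n1 n2) in
  match k, l with
  | M1, M2 => neg a3 | M1, M3 => a2 | M1, G2 => neg gE3 | M1, G3 => gE2
  | M2, M1 => a3 | M2, M3 => neg a1 | M2, G1 => gE3 | M2, G3 => neg gE1
  | M3, M1 => neg a2 | M3, M2 => a1 | M3, G1 => neg gE2 | M3, G2 => gE1
  | G1, M2 => neg gE3 | G1, M3 => gE2
  | G2, M1 => gE3 | G2, M3 => neg gE1
  | G3, M1 => neg gE2 | G3, M2 => gE1
  | _, _ => eCst 0
  end.

Definition PP := Pi (mu1 c N n n1 n2) (mu2 c N n n1 n2) (mu3' c N n n1 n2).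

Lemma Pi_eval q k l : PP q k l = eval (Pe k l) q.
Proof.
  unfold PP. rewrite mu1_eq, mu2_eq, mu3'_eq.
  destruct k, l; unfold Pi, Pe, neg; unfold mE1, mE2, mE3, gE1, gE2, gE3; cbv zeta; cbn [eval]; ring.
Qed.

Lemma PP_skew q i j : PP q i j = - PP q j i.
Proof. unfold PP, Pi; destruct i, j; ring. Qed.

Definition d1 j p := eval (deriv (mu1e c N n n1 n2) j) p.
Definition d2 j p := eval (deriv (mu2e c N n n1 n2) j) p.
Definition d3 j p := eval (deriv (mu3pe c N n n1 n2) j) p.

Lemma curl0 p : p G1 * (d3 G2 p - d2 G3 p) + p G2 * (d1 G3 p - d3 G1 p) + p G3 * (d2 G1 p - d1 G2 p) = 0.
Proof. unfold d1, d2, d3, mu1e, mu2e, mu3pe; simpl; ring. Qed.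

Lemma dM p : d1 M1 p = 0 /\ d1 M2 p = 0 /\ d1 M3 p = 0 /\ d2 M1 p = 0 /\ d2 M2 p = 0 /\ d2 M3 p = 0
  /\ d3 M1 p = 0 /\ d3 M2 p = 0 /\ d3 M3 p = 0.
Proof. unfold d1, d2, d3, mu1e, mu2e, mu3pe; simpl; repeat split; ring. Qed.

Definition DPc p i k l := eval (deriv (Pe k l) i) p.

Lemma DPc_form p i k l : DPc p i k l =
  match k, l with
  | M1, M2 => - ((if idx_eqb M3 i then 1 else 0) + d3 i p)
  | M1, M3 => (if idx_eqb M2 i then 1 else 0) + d2 i p
  | M1, G2 => - (if idx_eqb G3 i then 1 else 0) | M1, G3 => (if idx_eqb G2 i then 1 else 0)
  | M2, M1 => (if idx_eqb M3 i then 1 else 0) + d3 i p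
  | M2, M3 => - ((if idx_eqb M1 i then 1 else 0) + d1 i p)
  | M2, G1 => (if idx_eqb G3 i then 1 else 0) | M2, G3 => - (if idx_eqb G1 i then 1 else 0)
  | M3, M1 => - ((if idx_eqb M2 i then 1 else 0) + d2 i p)
  | M3, M2 => (if idx_eqb M1 i then 1 else 0) + d1 i p
  | M3, G1 => - (if idx_eqb G2 i then 1 else 0) | M3, G2 => (if idx_eqb G1 i then 1 else 0)
  | G1, M2 => - (if idx_eqb G3 i then 1 else 0) | G1, M3 => (if idx_eqb G2 i then 1 else 0)
  | G2, M1 => (if idx_eqb G3 i then 1 else 0) | G2, M3 => - (if idx_eqb G1 i then 1 else 0)
  | G3, M1 => - (if idx_eqb G2 i then 1 else 0) | G3, M2 => (if idx_eqb G1 i then 1 else 0)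
  | _, _ => 0
  end.
Proof. unfold DPc, d1, d2, d3. destruct k, l; unfold Pe, neg, mE1, mE2, mE3, gE1, gE2, gE3; cbv zeta; cbn [eval deriv]; ring. Qed.

Lemma struct0 p (a b cc : idx -> R) :
  Sst (PP p) (DPc p) a b cc + Sst (PP p) (DPc p) b cc a + Sst (PP p) (DPc p) cc a b = 0.
Proof.
  destruct (dM p) as (E1 & E2 & E3 & E4 & E5 & E6 & E7 & E8 & E9).
  assert (Hc := curl0 p).
  unfold Sst, sv, mv, sum6. rewrite !DPc_form. unfold PP, Pi. cbn [idx_eqb].
  rewrite E1, E2, E3, E4, E5, E6, E7, E8, E9.
  set (curl := p G1 * (d3 G2 p - d2 G3 p) + p G2 * (d1 G3 p - d3 G1 p) + p G3 * (d2 G1 p - d1 G2 p)) in Hc.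
  transitivity (curl * (a M1 * (b M2 * cc M3 - b M3 * cc M2) - a M2 * (b M1 * cc M3 - b M3 * cc M1)
                        + a M3 * (b M1 * cc M2 - b M2 * cc M1))).
  - unfold curl. ring.
  - rewrite Hc. ring.
Qed.
End EP.

Theorem poisson_thm c N n n1 n2 :
  poisson_on inD (Pi (mu1 c N n n1 n2) (mu2 c N n n1 n2) (mu3' c N n n1 n2)).
Proof.
  fold (PP c N n n1 n2). set (P := PP c N n n1 n2).
  intros f g h Sf Sg Sh df dg dh dfg dgh dhf Gf Gg Gh Gfg Ggh Ghf p HD.
  destruct (hess_of_smooth f df Sf Gf) as [Hf [HfP HfS]].
  destruct (hess_of_smooth g dg Sg Gg) as [Hg [HgP HgS]].
  destruct (hess_of_smooth h dh Sh Gh) as [Hh [HhP HhS]].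
  assert (HP : forall i k l, partial (fun q => P q k l) i p (DPc c N n n1 n2 p i k l)).
  { intros i k l. apply (partial_local (eval (Pe c N n n1 n2 k l))); auto.
    - intros q _. unfold P. symmetry; apply Pi_eval.
    - apply partial_eval; auto. }
  assert (BP : forall (F G : State -> idx -> R) HF HG, (forall i k, partial (fun q => F q k) i p (HF p k i)) ->
            (forall i k, partial (fun q => G q k) i p (HG p k i)) ->
            forall (FG : State -> idx -> R), is_grad inD (bracket P F G) FG ->
            forall i, FG p i = brdv (P p) (DPc c N n n1 n2 p) (fun k i => HF p k i) (F p) (fun k i => HG p k i) (G p) i).
  { intros F G HF HG H1 H2 FG HFG i. eapply grad_unique. apply (HFG p HD i).
    apply (bracket_partial P F G p i (fun k => HF p k i) (fun k => HG p k i) (DPc c N n n1 n2 p i)); auto. }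
  assert (Efg := BP df dg Hf Hg (fun i k => HfP p HD k i) (fun i k => HgP p HD k i) dfg Gfg).
  assert (Egh := BP dg dh Hg Hh (fun i k => HgP p HD k i) (fun i k => HhP p HD k i) dgh Ggh).
  assert (Ehf := BP dh df Hh Hf (fun i k => HhP p HD k i) (fun i k => HfP p HD k i) dhf Ghf).
  unfold bracket.
  apply (jacobi_alg (P p) (DPc c N n n1 n2 p) (PP_skew c N n n1 n2 p) (df p) (dg p) (dh p)
           (dfg p) (dgh p) (dhf p) (fun k i => Hf p k i) (fun k i => Hg p k i) (fun k i => Hh p k i)).
  - intros; apply HfS; auto.
  - intros; apply HgS; auto.
  - intros; apply HhS; auto.
  - apply struct0.
  - exact Efg.
  - exact Egh.
  - exact Ehf.
Qed.

Lemma mvt_bound (f f' : R -> R) a b B : a <= b ->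
  (forall x, a <= x <= b -> derivable_pt_lim f x (f' x)) ->
  (forall x, a <= x <= b -> Rabs (f' x) <= B) -> Rabs (f b - f a) <= B * (b - a).
Proof.
  intros Hab Hd HB. destruct (Req_dec a b) as [<-|Ne].
  - replace (f a - f a) with 0 by ring. rewrite Rabs_R0. lra.
  - destruct (MVT_cor2 f f' a b ltac:(lra) Hd) as [x [E Hx]].
    rewrite E, Rabs_mult, (Rabs_pos_eq (b - a)) by lra.
    apply Rmult_le_compat_r; [lra|]. apply HB; lra.
Qed.

Lemma mvt_abs (f f' : R -> R) lo hi B u v : lo <= u <= hi -> lo <= v <= hi ->
  (forall x, lo <= x <= hi -> derivable_pt_lim f x (f' x)) ->
  (forall x, lo <= x <= hi -> Rabs (f' x) <= B) -> Rabs (f u - f v) <= B * Rabs (u - v).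
Proof.
  intros Hu Hv Hd HB. destruct (Rle_dec v u).
  - rewrite (Rabs_pos_eq (u - v)) by lra. apply (mvt_bound f f'); [lra| |]; intros; [apply Hd|apply HB]; lra.
  - rewrite <- (Rabs_Ropp (u - v)), (Rabs_pos_eq (- (u - v))) by lra.
    rewrite <- (Rabs_Ropp (f u - f v)).
    replace (- (f u - f v)) with (f v - f u) by ring. replace (- (u - v)) with (v - u) by ring.
    apply (mvt_bound f f'); [lra| |]; intros; [apply Hd|apply HB]; lra.
Qed.

Lemma lip_cont g t M : (forall s, Rabs (g s - g t) <= M * Rabs (s - t)) -> continuity_pt g t.
Proof.
  intros H eps He. exists (eps / (Rabs M + 1)). split.
  - apply Rdiv_lt_0_compat; [lra|]. assert (Hm := Rabs_pos M); lra.
  - intros x [_ Hx]. simpl in *. unfold Rdist in *.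
    eapply Rle_lt_trans; [apply H|].
    assert (Hm := Rabs_pos M). assert (Hx0 := Rabs_pos (x - t)).
    apply Rle_lt_trans with (Rabs M * Rabs (x - t)).
    + apply Rmult_le_compat_r; auto. apply Rle_abs.
    + apply Rle_lt_trans with ((Rabs M + 1) * Rabs (x - t)); [nra|].
      apply Rmult_lt_reg_l with (/ (Rabs M + 1)); [apply Rinv_0_lt_compat; lra|].
      rewrite <- Rmult_assoc, Rinv_l by lra. unfold Rdiv in Hx. lra.
Qed.

Lemma sdist_le x y B : (forall j, Rabs (x j - y j) <= B) -> sdist x y <= 6 * B.
Proof. intro H. unfold sdist, sum6. generalize (H M1) (H M2) (H M3) (H G1) (H G2) (H G3). lra. Qed.

Section ODE.
Variables (F : State -> idx -> R) (x0 : State) (r K L : R).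
Hypothesis Hr : 0 < r.
Hypothesis HK : 0 <= K.
Hypothesis HL : 0 <= L.
Hypothesis HFb : forall x, box x0 r x -> forall i, Rabs (F x i) <= K.
Hypothesis HFl : forall x y, box x0 r x -> box x0 r y -> forall i, Rabs (F x i - F y i) <= L * sdist x y.

Definition hh := Rmin (r / (K + 1)) (1 / (12 * (L + 1))).
Lemma hh_pos : 0 < hh.
Proof. unfold hh; apply Rmin_pos; apply Rdiv_lt_0_compat; lra. Qed.
Lemma hh_K : K * hh <= r.
Proof.
  unfold hh. apply Rle_trans with (K * (r / (K + 1))).
  - apply Rmult_le_compat_l; auto; apply Rmin_l.
  - apply Rmult_le_reg_r with (K + 1); [lra|]. unfold Rdiv.
    rewrite Rmult_assoc, (Rmult_assoc r), Rinv_l by lra. nra.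
Qed.
Lemma hh_L : 6 * L * hh <= 1 / 2.
Proof.
  unfold hh. apply Rle_trans with (6 * L * (1 / (12 * (L + 1)))).
  - apply Rmult_le_compat_l; [lra|]; apply Rmin_r.
  - apply Rmult_le_reg_r with (12 * (L + 1)); [lra|]. unfold Rdiv.
    rewrite Rmult_assoc, (Rmult_assoc 1), Rinv_l by lra. nra.
Qed.

Definition cl t := Rmax 0 (Rmin hh t).
Lemma cl_cases t : (t < 0 /\ cl t = 0) \/ (0 <= t <= hh /\ cl t = t) \/ (hh < t /\ cl t = hh).
Proof.
  assert (H := hh_pos). unfold cl, Rmax, Rmin.
  destruct (Rle_dec hh t) as [a|a].
  - destruct (Rle_dec 0 hh) as [b|b]; [|lra].
    destruct (Req_dec t hh) as [->|Ne]; [right; left; lra|right; right; lra].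
  - destruct (Rle_dec 0 t) as [b|b]; [right; left; lra|left; lra].
Qed.
Lemma cl_range t : 0 <= cl t <= hh.
Proof. assert (H := hh_pos). destruct (cl_cases t) as [[A B]|[[A B]|[A B]]]; rewrite B; lra. Qed.
Lemma cl_lip t s : Rabs (cl t - cl s) <= Rabs (t - s).
Proof.
  assert (H := hh_pos).
  assert (A1 := Rle_abs (t - s)); assert (A2 := Rle_abs (-(t - s))); rewrite Rabs_Ropp in A2.
  apply Rabs_le.
  destruct (cl_cases t) as [[A B]|[[A B]|[A B]]]; destruct (cl_cases s) as [[C D]|[[C D]|[C D]]];
  rewrite B, D; lra.
Qed.
Lemma cl_id t : 0 <= t <= hh -> cl t = t.
Proof. intro. destruct (cl_cases t) as [[A B]|[[A B]|[A B]]]; auto; lra. Qed.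

Definition contI (g : R -> R) := forall x, 0 <= x <= hh -> continuity_pt g x.
Definition h0 : 0 <= hh := Rlt_le _ _ hh_pos.

Definition Int (g : R -> R) (t : R) : R :=
  match excluded_middle_informative (contI g) with
  | left C => primitive h0 (FTC_P1 h0 C) (cl t)
  | right _ => 0
  end.

Lemma Int_prop g : contI g -> exists Pr : R -> R, (forall t, Int g t = Pr (cl t)) /\
  (forall x, 0 <= x <= hh -> derivable_pt_lim Pr x (g x)) /\ Pr 0 = 0.
Proof.
  intro C. unfold Int. destruct (excluded_middle_informative (contI g)) as [C'|Nc]; [|contradiction].
  exists (primitive h0 (FTC_P1 h0 C')). split; [auto|split].
  - intros x Hx. apply RiemannInt_P28; auto.
  - unfold primitive. destruct (Rle_dec 0 0) as [a|a]; [|lra].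
    destruct (Rle_dec 0 hh) as [b|b]; [apply RiemannInt_P9|exfalso; apply b; apply h0].
Qed.

Fixpoint Xs (k : nat) : R -> State :=
  match k with
  | O => fun _ => x0
  | S k => fun t i => x0 i + Int (fun s => F (Xs k s) i) t
  end.

Definition Inv (X : R -> State) := (forall t s i, Rabs (X t i - X s i) <= K * Rabs (t - s)) /\
  (forall t i, Rabs (X t i - x0 i) <= K * cl t).

Lemma Inv_box X t : Inv X -> box x0 r (X t).
Proof. intros [_ H] i. eapply Rle_trans; [apply H|]. assert (Hc := cl_range t).
  apply Rle_trans with (K * hh); [apply Rmult_le_compat_l; lra|apply hh_K]. Qed.

Lemma g_cont X i : Inv X -> forall t, continuity_pt (fun s => F (X s) i) t.
Proof.
  intros HI t. apply (lip_cont _ _ (L * (6 * K))). intro s.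
  eapply Rle_trans; [apply HFl; apply Inv_box; auto|].
  replace (L * (6 * K) * Rabs (s - t)) with (L * (6 * (K * Rabs (s - t)))) by ring.
  apply Rmult_le_compat_l; auto.
  apply sdist_le. intro j. apply (proj1 HI).
Qed.

Lemma Int_facts X i : Inv X -> exists Pr : R -> R,
  (forall t, Int (fun s => F (X s) i) t = Pr (cl t)) /\
  (forall x, 0 <= x <= hh -> derivable_pt_lim Pr x (F (X x) i)) /\ Pr 0 = 0 /\
  (forall u v, 0 <= u <= hh -> 0 <= v <= hh -> Rabs (Pr u - Pr v) <= K * Rabs (u - v)).
Proof.
  intro HI. destruct (Int_prop (fun s => F (X s) i)) as [Pr [E1 [E2 E3]]].
  { intros x _; apply g_cont; auto. }
  exists Pr. split; [auto|split; [auto|split; [auto|]]].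
  intros u v Hu Hv. apply (mvt_abs Pr (fun s => F (X s) i) 0 hh); auto.
  intros x _. apply HFb. apply Inv_box; auto.
Qed.

Lemma Xs_S k t i : Xs (S k) t i = x0 i + Int (fun s => F (Xs k s) i) t.
Proof. reflexivity. Qed.

Lemma Xs_Inv k : Inv (Xs k).
Proof.
  induction k.
  - split; intros; simpl; replace (x0 i - x0 i) with 0 by ring; rewrite Rabs_R0;
      [apply Rmult_le_pos; auto; apply Rabs_pos|apply Rmult_le_pos; auto; apply cl_range].
  - split.
    + intros t s i. destruct (Int_facts (Xs k) i IHk) as [Pr [E1 [_ [_ E4]]]].
      rewrite !Xs_S, !E1. replace (x0 i + Pr (cl t) - (x0 i + Pr (cl s))) with (Pr (cl t) - Pr (cl s)) by ring.
      eapply Rle_trans; [apply E4; apply cl_range|]. apply Rmult_le_compat_l; auto. apply cl_lip.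
    + intros t i. destruct (Int_facts (Xs k) i IHk) as [Pr [E1 [_ [E3 E4]]]].
      rewrite !Xs_S, !E1. replace (x0 i + Pr (cl t) - x0 i) with (Pr (cl t) - Pr 0) by (rewrite E3; ring).
      eapply Rle_trans; [apply E4; [apply cl_range|split; [lra|apply h0]]|].
      rewrite Rminus_0_r, Rabs_pos_eq by apply cl_range. lra.
Qed.

Lemma Xs_deriv k i t : 0 < t < hh -> derivable_pt_lim (fun s => Xs (S k) s i) t (F (Xs k t) i).
Proof.
  intro Ht. destruct (Int_facts (Xs k) i (Xs_Inv k)) as [Pr [E1 [E2 _]]].
  apply (derivable_pt_lim_locally_ext (fun s => x0 i + Pr s) _ _ 0 hh); auto.
  - intros z Hz. rewrite Xs_S, E1, cl_id; auto; lra.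
  - eapply dpl_eq; [apply Dplus; [apply Dconst|apply E2; lra]|]. ring.
Qed.

Definition C0 := K * hh.
Definition q := 6 * L * hh.

Lemma Xs_diff k : forall t i, Rabs (Xs (S k) t i - Xs k t i) <= C0 * q ^ k.
Proof.
  induction k; intros t i.
  - simpl pow. rewrite Rmult_1_r. eapply Rle_trans; [apply (proj2 (Xs_Inv 1))|].
    unfold C0. apply Rmult_le_compat_l; auto. apply cl_range.
  - destruct (Int_facts (Xs (S k)) i (Xs_Inv (S k))) as [P2 [A1 [A2 [A3 _]]]].
    destruct (Int_facts (Xs k) i (Xs_Inv k)) as [P1 [B1 [B2 [B3 _]]]].
    rewrite (Xs_S (S k)), (Xs_S k), A1, B1.
    replace (x0 i + P2 (cl t) - (x0 i + P1 (cl t))) with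
      ((fun u => P2 u - P1 u) (cl t) - (fun u => P2 u - P1 u) 0) by (rewrite A3, B3; ring).
    eapply Rle_trans.
    + apply (mvt_bound (fun u => P2 u - P1 u) (fun u => F (Xs (S k) u) i - F (Xs k u) i) 0 (cl t)
               (L * (6 * (C0 * q ^ k)))).
      * apply cl_range.
      * intros x Hx. apply derivable_pt_lim_minus; [apply A2|apply B2]; assert (Hc := cl_range t); lra.
      * intros x Hx. eapply Rle_trans; [apply HFl; apply Inv_box; apply Xs_Inv|].
        apply Rmult_le_compat_l; auto. apply sdist_le. intro j. apply IHk.
    + assert (Hc := cl_range t). assert (Hq : 0 <= q ^ k) by (apply pow_le; unfold q; assert (H := hh_pos); nra).
      assert (HC : 0 <= C0) by (unfold C0; assert (H := hh_pos); nra).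
      simpl pow. unfold q at 2. rewrite Rminus_0_r.
      apply Rle_trans with (L * (6 * (C0 * q ^ k)) * hh).
      * apply Rmult_le_compat_l; [|lra]. apply Rmult_le_pos; auto. nra.
      * apply Req_le. ring.
Qed.

Lemma q_pos : 0 <= q.
Proof. unfold q; assert (H := hh_pos); nra. Qed.
Lemma q_half : q <= 1 / 2.
Proof. unfold q; apply hh_L. Qed.
Lemma C0_pos : 0 <= C0.
Proof. unfold C0; assert (H := hh_pos); nra. Qed.

Lemma Xs_cauchy n d t i : Rabs (Xs (n + d) t i - Xs n t i) <= 2 * C0 * q ^ n - 2 * C0 * q ^ (n + d).
Proof.
  induction d.
  - rewrite Nat.add_0_r. replace (Xs n t i - Xs n t i) with 0 by ring. rewrite Rabs_R0. lra.
  - rewrite Nat.add_succ_r.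
    replace (Xs (S (n + d)) t i - Xs n t i) with
      ((Xs (S (n + d)) t i - Xs (n + d) t i) + (Xs (n + d) t i - Xs n t i)) by ring.
    eapply Rle_trans; [apply Rabs_triang|].
    assert (H1 := Xs_diff (n + d) t i). simpl pow.
    assert (Hq := q_pos). assert (Hq2 := q_half). assert (HC := C0_pos).
    assert (Hp : 0 <= q ^ (n + d)) by (apply pow_le; auto).
    assert (0 <= C0 * q ^ (n + d)) by nra.
    nra.
Qed.

Lemma Xs_cauchy2 n m t i : (m >= n)%nat -> Rabs (Xs m t i - Xs n t i) <= 2 * C0 * q ^ n.
Proof.
  intro H. replace m with (n + (m - n))%nat by lia.
  eapply Rle_trans; [apply Xs_cauchy|].
  assert (0 <= q ^ (n + (m - n))) by (apply pow_le; apply q_pos).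
  assert (HC := C0_pos). nra.
Qed.

Lemma q_small y : 0 < y -> exists N, forall n, (n >= N)%nat -> q ^ n < y.
Proof.
  intro Hy. destruct (pow_lt_1_zero q) with y as [N HN]; auto.
  { rewrite Rabs_pos_eq by apply q_pos. assert (H := q_half); lra. }
  exists N. intros n Hn. specialize (HN n Hn). rewrite Rabs_pos_eq in HN; auto.
  apply pow_le; apply q_pos.
Qed.

Lemma Xs_cc t i : Cauchy_crit (fun n => Xs n t i).
Proof.
  intros eps He. assert (HC := C0_pos).
  destruct (q_small (eps / (4 * C0 + 1))) as [N HN]; [apply Rdiv_lt_0_compat; lra|].
  exists N. intros n m Hn Hm. unfold Rdist.
  replace (Xs n t i - Xs m t i) with ((Xs n t i - Xs N t i) - (Xs m t i - Xs N t i)) by ring.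
  eapply Rle_lt_trans; [apply Rabs_triang|]. rewrite Rabs_Ropp.
  assert (A := Xs_cauchy2 N n t i Hn). assert (B := Xs_cauchy2 N m t i Hm).
  assert (Hq := HN N (le_n N)).
  assert (Hq' : C0 * q ^ N <= C0 * (eps / (4 * C0 + 1))) by (apply Rmult_le_compat_l; lra).
  assert (C0 * (eps / (4 * C0 + 1)) * 4 < eps).
  { apply Rmult_lt_reg_r with (4 * C0 + 1); [lra|]. unfold Rdiv.
    replace (C0 * (eps * / (4 * C0 + 1)) * 4 * (4 * C0 + 1)) with (4 * C0 * eps * ((4 * C0 + 1) * / (4 * C0 + 1))) by ring.
    rewrite Rinv_r by lra. nra. }
  lra.
Qed.

Definition Xl (t : R) (i : idx) : R := proj1_sig (R_complete _ (Xs_cc t i)).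
Lemma Xl_cv t i : Un_cv (fun n => Xs n t i) (Xl t i).
Proof. unfold Xl. destruct (R_complete _ (Xs_cc t i)); auto. Qed.

Lemma lim_bound (u : nat -> R) l a B n : Un_cv u l -> (forall m, (m >= n)%nat -> Rabs (u m - a) <= B) ->
  Rabs (l - a) <= B.
Proof.
  intros Hu Hb. destruct (Rle_dec (Rabs (l - a)) B) as [|Hn]; auto. exfalso.
  destruct (Hu (Rabs (l - a) - B)) as [N HN]; [lra|].
  specialize (HN (Nat.max N n) (Nat.le_max_l _ _)). specialize (Hb (Nat.max N n) (Nat.le_max_r _ _)).
  unfold Rdist in HN.
  assert (Rabs (l - a) <= Rabs (u (Nat.max N n) - l) + Rabs (u (Nat.max N n) - a)).
  { replace (l - a) with (- (u (Nat.max N n) - l) + (u (Nat.max N n) - a)) by ring.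
    eapply Rle_trans; [apply Rabs_triang|]. rewrite Rabs_Ropp; lra. }
  lra.
Qed.

Lemma Xl_near n t i : Rabs (Xl t i - Xs n t i) <= 2 * C0 * q ^ n.
Proof. apply (lim_bound _ _ _ _ n (Xl_cv t i)). intros m Hm. apply Xs_cauchy2; auto. Qed.

Lemma Xl_x0 t i : Rabs (Xl t i - x0 i) <= K * cl t.
Proof. apply (lim_bound _ _ _ _ 0 (Xl_cv t i)). intros m _. apply (proj2 (Xs_Inv m)). Qed.

Lemma Xl_box t : box x0 r (Xl t).
Proof. intro i. eapply Rle_trans; [apply Xl_x0|]. assert (Hc := cl_range t).
  apply Rle_trans with (K * hh); [apply Rmult_le_compat_l; lra|apply hh_K]. Qed.

Lemma Xl_deriv t i : 0 < t < hh -> derivable_pt_lim (fun s => Xl s i) t (F (Xl t) i).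
Proof.
  intro Ht. assert (Hh := hh_pos).
  set (d := mkposreal (hh / 2) ltac:(lra)).
  apply (CVU_derivable (fun n s => Xs (S n) s i) (fun n s => F (Xs n s) i)
           (fun s => Xl s i) (fun s => F (Xl s) i) (hh / 2) d).
  - intros eps He. assert (HC := C0_pos).
    set (X := 12 * L * C0). assert (HX : 0 <= X) by (unfold X; nra).
    destruct (q_small (eps / (X + 1))) as [N HN]; [apply Rdiv_lt_0_compat; lra|].
    exists N. intros n y Hn _.
    eapply Rle_lt_trans; [apply HFl; [apply Xl_box|apply Inv_box; apply Xs_Inv]|].
    apply Rle_lt_trans with (L * (6 * (2 * C0 * q ^ n))).
    + apply Rmult_le_compat_l; auto. apply sdist_le. intro j. apply Xl_near.
    + specialize (HN n Hn). assert (Hq : 0 <= q ^ n) by (apply pow_le; apply q_pos).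
      replace (L * (6 * (2 * C0 * q ^ n))) with (X * q ^ n) by (unfold X; ring).
      apply Rle_lt_trans with (X * (eps / (X + 1))); [apply Rmult_le_compat_l; lra|].
      apply Rmult_lt_reg_r with (X + 1); [lra|]. unfold Rdiv.
      replace (X * (eps * / (X + 1)) * (X + 1)) with (X * eps * ((X + 1) * / (X + 1))) by ring.
      rewrite Rinv_r by lra. nra.
  - intros x _. intros eps He. destruct (Xl_cv x i eps He) as [N HN]. exists N.
    intros n Hn. apply HN. lia.
  - intros n x Hx. unfold Boule in Hx. simpl in Hx. apply abs_split_lt in Hx.
    apply Xs_deriv. lra.
  - unfold Boule; simpl. apply Rabs_def1; lra.
Qed.
End ODE.

Theorem ode_exists (F : State -> idx -> R) (x0 : State) (r K L : R) :
  0 < r -> 0 <= K -> 0 <= L ->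
  (forall x, box x0 r x -> forall i, Rabs (F x i) <= K) ->
  (forall x y, box x0 r x -> box x0 r y -> forall i, Rabs (F x i - F y i) <= L * sdist x y) ->
  exists h (X : R -> State), 0 < h /\ (forall t, 0 < t < h -> forall i, derivable_pt_lim (fun s => X s i) t (F (X t) i)) /\ (forall t, box x0 r (X t)) /\ (forall t i, 0 <= t -> Rabs (X t i - x0 i) <= K * t).
Proof.
  intros Hr HK HL HFb HFl.
  exists (hh r K L), (Xl F x0 r K L Hr HK HL HFb HFl). split; [apply hh_pos; auto|split; [|split]].
  - intros t Ht i. apply Xl_deriv; auto.
  - intro t. apply Xl_box.
  - intros t i Ht. eapply Rle_trans; [apply Xl_x0|]. apply Rmult_le_compat_l; auto.
    destruct (cl_cases r K L Hr HK HL t) as [[A B]|[[A B]|[A B]]]; rewrite B; lra.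
Qed.

Lemma lip6 (E : idx -> ex) p0 r : 0 < rho p0 -> 0 < r -> 4 * r <= rho p0 ->
  exists K L, 0 <= K /\ 0 <= L /\ forall q q', box p0 r q -> box p0 r q' -> forall i,
    Rabs (eval (E i) q) <= K /\ Rabs (eval (E i) q - eval (E i) q') <= L * sdist q q'.
Proof.
  intros H1 H2 H3.
  destruct (lip (E M1) p0 r H1 H2 H3) as (K1 & L1 & A1 & B1 & C1).
  destruct (lip (E M2) p0 r H1 H2 H3) as (K2 & L2 & A2 & B2 & C2).
  destruct (lip (E M3) p0 r H1 H2 H3) as (K3 & L3 & A3 & B3 & C3).
  destruct (lip (E G1) p0 r H1 H2 H3) as (K4 & L4 & A4 & B4 & C4).
  destruct (lip (E G2) p0 r H1 H2 H3) as (K5 & L5 & A5 & B5 & C5).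
  destruct (lip (E G3) p0 r H1 H2 H3) as (K6 & L6 & A6 & B6 & C6).
  exists (K1 + K2 + K3 + K4 + K5 + K6), (L1 + L2 + L3 + L4 + L5 + L6).
  split; [lra|split; [lra|]]. intros q q' Hq Hq' i. assert (Hd := dist_pos q q').
  destruct i; [destruct (C1 q q' Hq Hq')|destruct (C2 q q' Hq Hq')|destruct (C3 q q' Hq Hq')
              |destruct (C4 q q' Hq Hq')|destruct (C5 q q' Hq Hq')|destruct (C6 q q' Hq Hq')];
  split; nra.
Qed.

Section PA.
Variables (c N n n1 n2 a1 a2 eps : R).

Definition w1e := eMul mE1 (eCst (/ (2 * c))).
Definition w2e := eMul mE2 (eCst (/ (2 * c))).
Definition w3e := eMul mE3 (eCst (/ c)).
Definition b1e := eAdd mE1 (mu1e c N n n1 n2).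
Definition b2e := eAdd mE2 (mu2e c N n n1 n2).
Definition b3e := eAdd mE3 (mu3e c N n n1 n2).
Definition u1e := deriv (Ue c N n n1 n2 a1 a2 eps) G1.
Definition u2e := deriv (Ue c N n n1 n2 a1 a2 eps) G2.
Definition u3e := deriv (Ue c N n n1 n2 a1 a2 eps) G3.

Definition FE (i : idx) : ex :=
  match i with
  | M1 => sE (sE (eMul gE2 u3e) (eMul gE3 u2e)) (sE (eMul w2e b3e) (eMul w3e b2e))
  | M2 => sE (sE (eMul gE3 u1e) (eMul gE1 u3e)) (sE (eMul w3e b1e) (eMul w1e b3e))
  | M3 => sE (sE (eMul gE1 u2e) (eMul gE2 u1e)) (sE (eMul w1e b2e) (eMul w2e b1e))
  | G1 => sE (eMul gE2 w3e) (eMul gE3 w2e)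
  | G2 => sE (eMul gE3 w1e) (eMul gE1 w3e)
  | G3 => sE (eMul gE1 w2e) (eMul gE2 w1e)
  end.

Lemma field_eval (gU1 gU2 gU3 : State -> R) :
  (forall p, inD p ->
        partial (Ufun c N n n1 n2 a1 a2 eps) G1 p (gU1 p) /\
        partial (Ufun c N n n1 n2 a1 a2 eps) G2 p (gU2 p) /\
        partial (Ufun c N n n1 n2 a1 a2 eps) G3 p (gU3 p)) ->
  forall p, inD p -> forall i, field c N n n1 n2 gU1 gU2 gU3 p i = eval (FE i) p.
Proof.
  intros HU p Hp i. destruct (HU p Hp) as (U1 & U2 & U3).
  rewrite U_eq in U1, U2, U3.
  assert (E1 := grad_unique _ _ _ _ _ U1 (partial_eval _ p G1 Hp)).
  assert (E2 := grad_unique _ _ _ _ _ U2 (partial_eval _ p G2 Hp)).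
  assert (E3 := grad_unique _ _ _ _ _ U3 (partial_eval _ p G3 Hp)).
  unfold field. rewrite mu1_eq, mu2_eq, mu3_eq, E1, E2, E3.
  destruct i; unfold FE, sE, w1e, w2e, w3e, b1e, b2e, b3e, u1e, u2e, u3e, mE1, mE2, mE3, gE1, gE2, gE3;
  cbv zeta; cbn [eval]; unfold Rdiv; ring.
Qed.

Definition Gex : ex :=
  eAdd (eAdd (eAdd (eAdd (eAdd (eMul (deriv (I2e c N n n1 n2) M1) (FE M1))
   (eMul (deriv (I2e c N n n1 n2) M2) (FE M2))) (eMul (deriv (I2e c N n n1 n2) M3) (FE M3)))
   (eMul (deriv (I2e c N n n1 n2) G1) (FE G1))) (eMul (deriv (I2e c N n n1 n2) G2) (FE G2)))
   (eMul (deriv (I2e c N n n1 n2) G3) (FE G3)).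

Lemma Gex_eval p : eval Gex p = sum6 (fun i => eval (deriv (I2e c N n n1 n2) i) p * eval (FE i) p).
Proof. reflexivity. Qed.

Definition x0 : State := fun j => match j with M2 | G1 | G3 => 1 | _ => 0 end.
Lemma rho_x0 : rho x0 = 1.
Proof. unfold rho, x0. simpl. transitivity (sqrt 1); [f_equal; ring|apply sqrt_1]. Qed.

Lemma Gex_x0 : c <> 0 -> eval Gex x0 = 3 * N / 2.
Proof.
  intro Hc. unfold Gex, FE, sE, w1e, w2e, w3e, b1e, b2e, b3e, u1e, u2e, u3e, mE1, mE2, mE3, gE1, gE2, gE3,
    I2e, phie, Fe, Qe, Ue, mu1e, mu2e, mu3e, sq, cube, gE1, gE2, gE3, mE1, mE2, mE3.
  cbn [eval deriv idx_eqb]. rewrite rho_x0. unfold x0. cbn. field. split; [auto|change (rho x0 <> 0); rewrite rho_x0; lra].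
Qed.

Lemma parta (hc : c > 0) (HN : N <> 0) (gU1 gU2 gU3 : State -> R) :
  (forall p, inD p ->
        partial (Ufun c N n n1 n2 a1 a2 eps) G1 p (gU1 p) /\
        partial (Ufun c N n n1 n2 a1 a2 eps) G2 p (gU2 p) /\
        partial (Ufun c N n n1 n2 a1 a2 eps) G3 p (gU3 p)) ->
  ~ constant_of_motion (field c N n n1 n2 gU1 gU2 gU3) inD (I2 c N n n1 n2).
Proof.
  intros HU Hcm.
  set (Fd := field c N n n1 n2 gU1 gU2 gU3).
  assert (Hr0 : 0 < rho x0) by (rewrite rho_x0; lra).
  assert (Hx0 : inD x0) by (unfold inD, x0; simpl; lra).
  assert (Bin : forall q, box x0 (1/4) q -> inD q).
  { intros q Hq. apply (box_inD x0 (1/4)); auto; [lra|rewrite rho_x0; lra]. }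
  destruct (lip6 FE x0 (1/4) Hr0 ltac:(lra) ltac:(rewrite rho_x0; lra)) as (K & L & HK & HL & HB).
  assert (HFe : forall q, box x0 (1/4) q -> forall i, Fd q i = eval (FE i) q).
  { intros q Hq i. apply field_eval; auto. }
  assert (HF1 : forall x, box x0 (1/4) x -> forall i, Rabs (Fd x i) <= K).
  { intros x Hx i. rewrite HFe by auto. apply (HB x x Hx Hx i). }
  assert (HF2 : forall x y, box x0 (1/4) x -> box x0 (1/4) y -> forall i, Rabs (Fd x i - Fd y i) <= L * sdist x y).
  { intros x y Hx Hy i. rewrite !HFe by auto. apply (HB x y Hx Hy i). }
  destruct (ode_exists Fd x0 (1/4) K L ltac:(lra) HK HL HF1 HF2) as (h & X & Hh & Hd & Hb & Hn).
  assert (Hsol : is_solution Fd inD 0 h X).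
  { split; [exact Hh|]. intros t Ht. split; [apply Bin; auto|]. intro i. apply Hd; auto. }
  assert (Hc := Hcm 0 h X Hsol).
  assert (Gz : forall t, 0 < t < h -> eval Gex (X t) = 0).
  { intros t Ht.
    assert (D1 : derivable_pt_lim (fun s => I2 c N n n1 n2 (X s)) t (eval Gex (X t))).
    { rewrite I2_eq. eapply dpl_eq. apply (chain _ X t (fun i => Fd (X t) i)); [apply Bin; auto|].
      intro i; apply Hd; auto.
      rewrite Gex_eval. assert (HFe2 : forall i, Fd (X t) i = eval (FE i) (X t)) by (intro; apply HFe; apply Hb).
      unfold sum6. cbv beta. rewrite !HFe2. reflexivity. }
    assert (D2 : derivable_pt_lim (fun s => I2 c N n n1 n2 (X s)) t 0).
    { apply (derivable_pt_lim_locally_ext (fun _ => I2 c N n n1 n2 (X t)) (fun s => I2 c N n n1 n2 (X s)) t 0 h).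
      - lra.
      - intros z Hz. cbv beta. apply Hc; auto.
      - apply Dconst. }
    eapply uniqueness_limite; eauto. }
  destruct (lip Gex x0 (1/4) Hr0 ltac:(lra) ltac:(rewrite rho_x0; lra)) as (KG & LG & HKG & HLG & HBG).
  assert (HN' : 0 < Rabs N) by (apply Rabs_pos_lt; auto).
  set (t := Rmin (h / 2) (Rabs N / (6 * LG * K + 1))).
  assert (Ht1 : t <= h / 2) by apply Rmin_l.
  assert (Ht2 : t <= Rabs N / (6 * LG * K + 1)) by apply Rmin_r.
  assert (HKL : 0 <= 6 * LG * K) by nra.
  assert (Ht0 : 0 < t) by (apply Rmin_pos; [lra|apply Rdiv_lt_0_compat; lra]).
  assert (Z := Gz t ltac:(lra)).
  assert (Bx0 : box x0 (1/4) x0) by (intro j; replace (x0 j - x0 j) with 0 by ring; rewrite Rabs_R0; lra).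
  destruct (HBG (X t) x0 (Hb t) Bx0) as [_ Hl].
  rewrite Z, Gex_x0 in Hl by lra.
  assert (Hdist : sdist (X t) x0 <= 6 * (K * t)).
  { apply sdist_le. intro j. apply Hn. lra. }
  assert (LG * sdist (X t) x0 <= LG * (6 * (K * t))) by (apply Rmult_le_compat_l; auto).
  assert (E : Rabs (0 - 3 * N / 2) = 3 / 2 * Rabs N).
  { replace (0 - 3 * N / 2) with ((- (3/2)) * N) by field. rewrite Rabs_mult, Rabs_Ropp, Rabs_pos_eq; lra. }
  rewrite E in Hl.
  assert (6 * LG * K * t <= 6 * LG * K * (Rabs N / (6 * LG * K + 1))) by (apply Rmult_le_compat_l; lra).
  assert (6 * LG * K * (Rabs N / (6 * LG * K + 1)) < Rabs N).
  { apply Rmult_lt_reg_r with (6 * LG * K + 1); [lra|]. unfold Rdiv.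
    replace (6 * LG * K * (Rabs N * / (6 * LG * K + 1)) * (6 * LG * K + 1)) with
      (6 * LG * K * Rabs N * ((6 * LG * K + 1) * / (6 * LG * K + 1))) by ring.
    rewrite Rinv_r by lra. nra. }
  nra.
Qed.
End PA.

Theorem mainTheorem10 (c N n n1 n2 a1 a2 eps : R) (hc : c > 0) :
  (* (a) *)
  (N <> 0 ->
   forall gU1 gU2 gU3 : State -> R,
     (forall p, inD p ->
        partial (Ufun c N n n1 n2 a1 a2 eps) G1 p (gU1 p) /\
        partial (Ufun c N n n1 n2 a1 a2 eps) G2 p (gU2 p) /\
        partial (Ufun c N n n1 n2 a1 a2 eps) G3 p (gU3 p)) ->
     ~ constant_of_motion (field c N n n1 n2 gU1 gU2 gU3) inD (I2 c N n n1 n2))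
  /\
  (* (b) *)
  ((forall p, inD p ->
      partial (phi c N n n1 n2) G1 p (mu1 c N n n1 n2 p - psi c N n n1 n2 p * p G1) /\
      partial (phi c N n n1 n2) G2 p (mu2 c N n n1 n2 p - psi c N n n1 n2 p * p G2) /\
      partial (phi c N n n1 n2) G3 p (mu3' c N n n1 n2 p - psi c N n n1 n2 p * p G3))
   /\ poisson_on inD (Pi (mu1 c N n n1 n2) (mu2 c N n n1 n2) (mu3' c N n n1 n2))
   /\ is_casimir inD (Pi (mu1 c N n n1 n2) (mu2 c N n n1 n2) (mu3' c N n n1 n2))
                 (I2 c N n n1 n2)).
Proof.
  split.
  - intros HN gU1 gU2 gU3 HU. apply (parta c N n n1 n2 a1 a2 eps hc HN gU1 gU2 gU3 HU).
  - split; [|split].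
    + intros p Hp. rewrite phi_eq. split; [|split].
      * rewrite <- (partb1 c N n n1 n2 p Hp). apply partial_eval; auto.
      * rewrite <- (partb2 c N n n1 n2 p Hp). apply partial_eval; auto.
      * rewrite <- (partb3 c N n n1 n2 p Hp). apply partial_eval; auto.
    + apply poisson_thm.
    + split.
      * rewrite I2_eq. apply smooth_eval.
      * intros dC HdC p Hp i. rewrite I2_eq in HdC.
        assert (E : forall j, dC p j = eval (deriv (I2e c N n n1 n2) j) p).
        { intro j. eapply grad_unique; [apply HdC; auto|apply partial_eval; auto]. }
        rewrite (sum6_ext _ (fun j => Pi (mu1 c N n n1 n2) (mu2 c N n n1 n2) (mu3' c N n n1 n2) p i j
                                      * eval (deriv (I2e c N n n1 n2) j) p)).
        -- apply casimir_rows; auto.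
        -- intro j. rewrite E. reflexivity.
Qed.
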